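(* Let $\kappa > 0$ and let $(X,d)$ be a complete CAT$(\kappa)$ space such that $d(v,w) < \pi/(2\sqrt{\kappa})$ for all $v,w \in X$. Let $f : X \to (-\infty,\infty]$ be a proper, convex and lower semi-continuous function which attains its minimum. Let $x_0 \in X$ and let $(\lambda_n)_{n\ge0}$ be a sequence of positive real numbers with $\sum_{n \ge 0}\lambda_n = \infty$. Define the sequence $(x_n)$ by \[ x_{n+1} = J_{\lambda_n}(x_n) = \operatorname{argmin}_{y \in X}\left[f(y) + \frac{1}{\lambda_n}\Psi_{x_n}(y)\right], \quad n \ge 0. \] Then $(x_n)$ $\Delta$-converges to a minimum point of $f$.
   Context: A geodesic space is a metric space in which any two points are joined by a geodesic segment; the point at distance $t\,d(x,y)$ from $x$ on such a segment is written $(1-t)x+ty$. A CAT$(\kappa)$ space ($\kappa>0$) is a metric space in which any two points at distance $<\pi/\sqrt{\kappa}$ are joined by a geodesic and every geodesic triangle of perimeter $<2\pi/\sqrt{\kappa}$ satisfies the CAT$(\kappa)$ comparison inequality with respect to its comparison triangle in the sphere of constant curvature $\kappa$. A function $f : X \to (-\infty,\infty]$ is proper if it is not identically $\infty$, and convex if $f((1-t)x+ty) \le (1-t)f(x)+tf(y)$ for all $x,y\in X$, $t\in[0,1]$. For $x \in X$, $\Psi_x : X \to [0,\infty)$ is defined by $\Psi_x(y) = \frac{1}{\kappa\cos(\sqrt{\kappa}\,d(y,x))} - \frac{\cos(\sqrt{\kappa}\,d(y,x))}{\kappa}$; for $\lambda>0$ the resolvent $J_\lambda(x) = \operatorname{argmin}_{y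 \in X}[f(y) + \frac{1}{\lambda}\Psi_x(y)]$ exists and is unique under the stated assumptions. $\Delta$-convergence: for a bounded sequence $(u_n)$ and $u \in X$ put $r(u,(u_n)) = \limsup_n d(u,u_n)$; the asymptotic radius is $r((u_n)) = \inf_{u\in X} r(u,(u_n))$ and the asymptotic center is $A((u_n)) = \{u \in X : r(u,(u_n)) = r((u_n))\}$. The sequence $(u_n)$ $\Delta$-converges to $u$ if $u$ is the unique point of the asymptotic center of every subsequence of $(u_n)$. *)

(* Defs.v *)
From Stdlib Require Import Reals Lra.
From Coquelicot Require Import Coquelicot.
Open Scope R_scope.

Definition is_metric {X : Type} (d : X -> X -> R) : Prop :=
  (forall x y, 0 <= d x y) /\
  (forall x y, d x y = 0 <-> x = y) /\
  (forall x y, d x y = d y x) /\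
  (forall x y z, d x z <= d x y + d y z).

Definition metric_complete {X : Type} (d : X -> X -> R) : Prop :=
  forall u : nat -> X,
    (forall eps, 0 < eps -> exists N, forall m n, (N <= m)%nat -> (N <= n)%nat ->
       d (u m) (u n) < eps) ->
    exists l, forall eps, 0 < eps -> exists N, forall n, (N <= n)%nat -> d (u n) l < eps.

(** A geodesic from x to y: an isometric map [0, d x y] -> X with endpoints x, y
    (represented as a function on R whose values off the interval are irrelevant).
    The point (1-t)x+ty of such a geodesic is g (t * d x y). *)
Definition geodesic {X : Type} (d : X -> X -> R) (x y : X) (g : R -> X) : Prop :=
  g 0 = x /\ g (d x y) = y /\
  forall s t, 0 <= s <= d x y -> 0 <= t <= d x y -> d (g s) (g t) = Rabs (s - t).

(** The model space M_kappa (kappa > 0): the sphere of radius 1/sqrt kappa in R^3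
    with its intrinsic (great-circle) distance. *)
Definition dot3 (u v : R * R * R) : R :=
  let '(u1, u2, u3) := u in let '(v1, v2, v3) := v in u1 * v1 + u2 * v2 + u3 * v3.

Definition Mk (kappa : R) : Type := { v : R * R * R | dot3 v v = / kappa }.

Definition dMk (kappa : R) (p q : Mk kappa) : R :=
  / sqrt kappa * acos (kappa * dot3 (proj1_sig p) (proj1_sig q)).

Inductive side := S1 | S2 | S3.

Definition CAT (kappa : R) {X : Type} (d : X -> X -> R) : Prop :=
  is_metric d /\
  (forall x y, d x y < PI / sqrt kappa -> exists g, geodesic d x y g) /\
  (forall (x y z : X) (g1 g2 g3 : R -> X),
     geodesic d x y g1 -> geodesic d y z g2 -> geodesic d z x g3 ->
     d x y + d y z + d z x < 2 * PI / sqrt kappa ->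
     forall (x' y' z' : Mk kappa) (h1 h2 h3 : R -> Mk kappa),
       dMk kappa x' y' = d x y -> dMk kappa y' z' = d y z -> dMk kappa z' x' = d z x ->
       geodesic (dMk kappa) x' y' h1 -> geodesic (dMk kappa) y' z' h2 ->
       geodesic (dMk kappa) z' x' h3 ->
       let G := fun i => match i with S1 => g1 | S2 => g2 | S3 => g3 end in
       let H := fun i => match i with S1 => h1 | S2 => h2 | S3 => h3 end in
       let L := fun i => match i with S1 => d x y | S2 => d y z | S3 => d z x end in
       forall (i j : side) (s t : R), 0 <= s <= L i -> 0 <= t <= L j ->
         d (G i s) (G j t) <= dMk kappa (H i s) (H j t)).

(** Functions X -> (-oo, +oo], as Rbar-valued functions never equal to -oo. *)
Definition proper_fun {X : Type} (f : X -> Rbar) : Prop :=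
  (forall x, f x <> m_infty) /\ (exists x, f x <> p_infty).

Definition convex_fun {X : Type} (d : X -> X -> R) (f : X -> Rbar) : Prop :=
  forall x y g t, geodesic d x y g -> 0 <= t <= 1 ->
    Rbar_le (f (g (t * d x y)))
            (Rbar_plus (Rbar_mult (1 - t) (f x)) (Rbar_mult t (f y))).

Definition lsc {X : Type} (d : X -> X -> R) (f : X -> Rbar) : Prop :=
  forall x (a : R), Rbar_lt a (f x) ->
    exists delta, 0 < delta /\ forall y, d y x < delta -> Rbar_lt a (f y).

Definition is_min_point {X : Type} (f : X -> Rbar) (z : X) : Prop :=
  forall y, Rbar_le (f z) (f y).

Definition Psi (kappa : R) {X : Type} (d : X -> X -> R) (x y : X) : R :=
  / (kappa * cos (sqrt kappa * d y x)) - cos (sqrt kappa * d y x) / kappa.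

Definition bounded_seq {X : Type} (d : X -> X -> R) (u : nat -> X) : Prop :=
  exists p M, forall n, d p (u n) <= M.

Definition asymp_r {X : Type} (d : X -> X -> R) (v : X) (u : nat -> X) : Rbar :=
  LimSup_seq (fun n => d v (u n)).

Definition asymp_radius {X : Type} (d : X -> X -> R) (u : nat -> X) : Rbar :=
  Glb_Rbar (fun r => exists v, asymp_r d v u = Finite r).

Definition asymp_center {X : Type} (d : X -> X -> R) (u : nat -> X) (v : X) : Prop :=
  asymp_r d v u = asymp_radius d u.

Definition Delta_converges {X : Type} (d : X -> X -> R) (u : nat -> X) (l : X) : Prop :=
  bounded_seq d u /\
  forall phi : nat -> nat, (forall n, (phi n < phi (S n))%nat) ->
    forall v, asymp_center d (fun n => u (phi n)) v <-> v = l.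

(* Main.v *)
Require Import Defs.
From Stdlib Require Import Reals Lra Psatz Lia ProofIrrelevance ClassicalEpsilon.
From Coquelicot Require Import Coquelicot.
Open Scope R_scope.

Lemma sin_le_id x : 0 <= x -> sin x <= x.
Proof. intros H. destruct (Req_dec x 0) as [->|]. rewrite sin_0; lra.
  left; apply sin_lt_x; lra. Qed.

Lemma sin_ge_third x : 0 <= x -> x <= PI/2 -> x/3 <= sin x.
Proof. intros H1 H2. assert (H3 := PI_4).
  destruct (SIN x H1 ltac:(lra)) as [H _].
  unfold sin_lb, sin_approx, sin_term in H. simpl in H.
  assert (x <= 2) by lra.
  eapply Rle_trans; [|exact H].
  match goal with |- _ <= ?e => replace e with (x - x^3/6 + x^5/120 - x^7/5040) by field end.
  assert (0 <= x^2) by nra. assert (x^2 <= 4) by nra.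
  assert (0 <= x^5*(1/120 - x^2/5040)) by (apply Rmult_le_pos; [apply pow_le; lra| lra]).
  nra. Qed.

Lemma one_minus_cos_le u : 0 <= cos u -> 1 - cos u <= (sin u)^2.
Proof. intros H. assert (Hs := sin2_cos2 u). unfold Rsqr in Hs.
  assert (cos u <= 1) by (destruct (COS_bound u); lra). nra. Qed.

Lemma one_minus_cos_ge x : 0 <= x -> x <= PI -> x^2/18 <= 1 - cos x.
Proof. intros H1 H2. replace x with (2*(x/2)) at 2 by field.
  rewrite cos_2a_sin. assert (H := sin_ge_third (x/2) ltac:(lra) ltac:(lra)).
  nra. Qed.

Lemma cos_lip s t : 0 <= s -> s <= t -> cos s - cos t <= t - s.
Proof. intros H1 H2. destruct (Rle_dec ((t-s)/2) PI) as [Hl|Hl].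
  - rewrite form2.
    assert (A := sin_le_id ((t - s)/2) ltac:(lra)).
    assert (A2 : 0 <= sin ((t-s)/2)) by (apply sin_ge_0; lra).
    assert (B : sin ((s - t)/2) = - sin ((t-s)/2)) by (rewrite <- sin_neg; f_equal; field).
    rewrite B. assert (C := SIN_bound ((s+t)/2)). nra.
  - assert (H5 := COS_bound s); assert (H6 := COS_bound t). assert (Hp := PI2_1). lra.
Qed.

Definition vlin (a:R) (u:R*R*R) (b:R) (v:R*R*R) : R*R*R :=
  let '(u1,u2,u3) := u in let '(v1,v2,v3) := v in (a*u1+b*v1, a*u2+b*v2, a*u3+b*v3).

Lemma dot_sym u v : dot3 u v = dot3 v u.
Proof. destruct u as [[u1 u2] u3], v as [[v1 v2] v3]; simpl; ring. Qed.
Lemma dot_lin_l a u b v w : dot3 (vlin a u b v) w = a*dot3 u w + b*dot3 v w.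
Proof. destruct u as [[u1 u2] u3], v as [[v1 v2] v3], w as [[w1 w2] w3]; simpl; ring. Qed.
Lemma dot_lin_r a u b v w : dot3 w (vlin a u b v) = a*dot3 w u + b*dot3 w v.
Proof. destruct u as [[u1 u2] u3], v as [[v1 v2] v3], w as [[w1 w2] w3]; simpl; ring. Qed.
Lemma dot_CS u v : (dot3 u v)^2 <= dot3 u u * dot3 v v.
Proof. destruct u as [[u1 u2] u3], v as [[v1 v2] v3]; simpl.
  assert (E : (u1*u1+u2*u2+u3*u3)*(v1*v1+v2*v2+v3*v3) - (u1*v1+u2*v2+u3*v3)^2
     = (u1*v2-u2*v1)^2 + (u1*v3-u3*v1)^2 + (u2*v3-u3*v2)^2) by ring.
  assert (0 <= (u1*v2-u2*v1)^2 + (u1*v3-u3*v1)^2 + (u2*v3-u3*v2)^2)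
    by (repeat apply Rplus_le_le_0_compat; apply pow2_ge_0).
  lra. Qed.

Lemma Mk_eq k (P Q : Mk k) : proj1_sig P = proj1_sig Q -> P = Q.
Proof. destruct P as [p Hp], Q as [q Hq]; simpl; intros ->. f_equal; apply proof_irrelevance. Qed.

Lemma sk_pos k : 0 < k -> 0 < sqrt k.
Proof. intros; apply sqrt_lt_R0; lra. Qed.
Lemma sk_sq k : 0 < k -> sqrt k * sqrt k = k.
Proof. intros; apply sqrt_sqrt; lra. Qed.

Lemma kdot_bd k (Hk : 0 < k) (p q : R*R*R) : dot3 p p = /k -> dot3 q q = /k ->
  -1 <= k * dot3 p q <= 1.
Proof. intros Hp Hq. assert (H := dot_CS p q). rewrite Hp, Hq in H.
  assert (E : (k * dot3 p q)^2 <= 1).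
  { replace ((k*dot3 p q)^2) with (k*k*(dot3 p q)^2) by ring.
    replace 1 with (k*k*(/k*/k)) by (field; lra). apply Rmult_le_compat_l; nra. }
  nra. Qed.

Lemma dMk_eq k (Hk : 0 < k) (P Q : Mk k) :
  sqrt k * dMk k P Q = acos (k * dot3 (proj1_sig P) (proj1_sig Q)).
Proof. unfold dMk. assert (H := sk_pos k Hk). field. lra. Qed.

Lemma acos_cos_abs y : Rabs y <= PI -> acos (cos y) = Rabs y.
Proof. intros H. destruct (Rle_dec 0 y).
  - rewrite Rabs_right in * by lra. apply acos_cos; lra.
  - rewrite Rabs_left in * by lra. rewrite <- cos_neg. apply acos_cos; lra. Qed.

Lemma slerp_geod k (Hk : 0 < k) (P Q : Mk k) :
  0 < acos (k * dot3 (proj1_sig P) (proj1_sig Q)) < PI ->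
  exists h : R -> Mk k, geodesic (dMk k) P Q h /\
   forall s (z : R*R*R), k * dot3 (proj1_sig (h s)) z =
     cos (sqrt k * s) * (k * dot3 (proj1_sig P) z) +
     sin (sqrt k * s) * (k * dot3 (proj1_sig Q) z
        - k * dot3 (proj1_sig P) (proj1_sig Q) * (k * dot3 (proj1_sig P) z))
       / sin (acos (k * dot3 (proj1_sig P) (proj1_sig Q))).
Proof.
  destruct P as [p Hp], Q as [q Hq]; simpl. intros Ha.
  set (c := k * dot3 p q) in *. set (al := acos c) in *.
  assert (Hc : cos al = c) by (apply cos_acos, kdot_bd; auto).
  set (sa := sin al).
  assert (Hsa : 0 < sa) by (apply sin_gt_0; lra).
  assert (Hsc : sa*sa + c*c = 1) by (rewrite <- Hc; unfold sa; assert (H:=sin2_cos2 al); unfold Rsqr in H; lra).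
  set (W := vlin (-c/sa) p (1/sa) q).
  assert (HpW : dot3 p W = 0).
  { unfold W; rewrite dot_lin_r, Hp. replace (dot3 p q) with (c/k) by (unfold c; field; lra).
    field; lra. }
  assert (HWW : dot3 W W = /k).
  { unfold W; rewrite dot_lin_l, !dot_lin_r, Hp, Hq, (dot_sym q p).
    replace (dot3 p q) with (c/k) by (unfold c; field; lra).
    transitivity ((1 - c*c)/(sa*sa)/k). field; lra.
    replace (1-c*c) with (sa*sa) by lra. field; lra. }
  set (v := fun s => vlin (cos (sqrt k * s)) p (sin (sqrt k * s)) W).
  assert (Hvv : forall s t, dot3 (v s) (v t) = cos (sqrt k * s - sqrt k * t) / k).
  { intros s t; unfold v; rewrite dot_lin_l, !dot_lin_r, Hp, HWW, HpW, (dot_sym W p), HpW.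
    rewrite cos_minus. field; lra. }
  assert (Hv : forall s, dot3 (v s) (v s) = /k).
  { intros s; rewrite Hvv. replace (sqrt k * s - sqrt k * s) with 0 by ring. rewrite cos_0; field; lra. }
  exists (fun s => exist _ (v s) (Hv s)). split; [split; [|split]|].
  - apply Mk_eq; simpl. unfold v. rewrite Rmult_0_r, cos_0, sin_0.
    destruct p as [[p1 p2] p3], W as [[w1 w2] w3]; simpl; f_equal; [f_equal|]; ring.
  - apply Mk_eq; simpl. unfold v. rewrite (dMk_eq k Hk); simpl. fold c. fold al. rewrite Hc. fold sa.
    unfold W. destruct p as [[p1 p2] p3], q as [[q1 q2] q3]; simpl; f_equal; [f_equal|]; field; lra.
  - intros s t Hs Ht. unfold dMk; simpl. rewrite Hvv.
    replace (k * (cos (sqrt k * s - sqrt k * t) / k)) with (cos (sqrt k * s - sqrt k * t)) by (field; lra).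
    assert (Hd : sqrt k * dMk k (exist _ p Hp) (exist _ q Hq) = al) by (rewrite dMk_eq; auto).
    assert (Hsk := sk_pos k Hk).
    rewrite acos_cos_abs.
    + replace (sqrt k * s - sqrt k * t) with (sqrt k * (s - t)) by ring.
      rewrite Rabs_mult, (Rabs_right (sqrt k)) by lra. field; lra.
    + replace (sqrt k * s - sqrt k * t) with (sqrt k * (s - t)) by ring.
      rewrite Rabs_mult, (Rabs_right (sqrt k)) by lra.
      assert (Rabs (s - t) <= dMk k (exist _ p Hp) (exist _ q Hq)) by (apply Rabs_le; lra).
      nra.
  - intros s z. simpl. unfold v. rewrite dot_lin_l. unfold W. rewrite dot_lin_l. fold c. fold al. fold sa.
    field. lra.
Qed.

Lemma geod_any k (Hk : 0 < k) (P Q : Mk k) : dMk k P Q < PI / sqrt k ->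
  exists h, geodesic (dMk k) P Q h.
Proof. intros Hd. assert (Hsk := sk_pos k Hk).
  assert (Ha : acos (k * dot3 (proj1_sig P) (proj1_sig Q)) < PI).
  { rewrite <- dMk_eq by auto. apply (Rmult_lt_compat_l (sqrt k)) in Hd; auto.
    replace (sqrt k * (PI / sqrt k)) with PI in Hd by (field; lra). lra. }
  destruct (Rlt_dec 0 (acos (k * dot3 (proj1_sig P) (proj1_sig Q)))) as [Hp|Hp].
  - destruct (slerp_geod k Hk P Q ltac:(lra)) as [h [Hh _]]. eauto.
  - assert (Hb := acos_bound (k * dot3 (proj1_sig P) (proj1_sig Q))).
    assert (H0 : acos (k * dot3 (proj1_sig P) (proj1_sig Q)) = 0) by lra.
    assert (H1 : k * dot3 (proj1_sig P) (proj1_sig Q) = 1).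
    { rewrite <- (cos_acos (k * dot3 (proj1_sig P) (proj1_sig Q))).
      rewrite H0; apply cos_0. destruct P, Q; apply kdot_bd; auto. }
    assert (HPQ : P = Q).
    { apply Mk_eq. destruct P as [[[p1 p2] p3] Hp'], Q as [[[q1 q2] q3] Hq']; simpl in *.
      assert (E : (p1-q1)^2+(p2-q2)^2+(p3-q3)^2 = 0).
      { replace ((p1-q1)^2+(p2-q2)^2+(p3-q3)^2) with
           ((p1*p1+p2*p2+p3*p3) + (q1*q1+q2*q2+q3*q3) - 2*(p1*q1+p2*q2+p3*q3)) by ring.
        rewrite Hp', Hq'. replace (p1*q1+p2*q2+p3*q3) with (/k) by (apply (Rmult_eq_reg_l k); [rewrite H1; field|]; lra).
        ring. }
      assert (S1 := pow2_ge_0 (p1-q1)). assert (S2 := pow2_ge_0 (p2-q2)). assert (S3 := pow2_ge_0 (p3-q3)).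
      assert (E1 : p1 - q1 = 0) by (match goal with |- ?a = 0 => destruct (Req_dec a 0) as [?|Hn]; [auto|exfalso; apply (pow_nonzero _ 2 Hn); lra] end).
      assert (E2 : p2 - q2 = 0) by (match goal with |- ?a = 0 => destruct (Req_dec a 0) as [?|Hn]; [auto|exfalso; apply (pow_nonzero _ 2 Hn); lra] end).
      assert (E3 : p3 - q3 = 0) by (match goal with |- ?a = 0 => destruct (Req_dec a 0) as [?|Hn]; [auto|exfalso; apply (pow_nonzero _ 2 Hn); lra] end).
      replace q1 with p1 by lra. replace q2 with p2 by lra. replace q3 with p3 by lra.
      auto. }
    subst Q. exists (fun _ => P). split; [|split]; auto.
    assert (Hz : dMk k P P = 0) by (apply (Rmult_eq_reg_l (sqrt k)); [rewrite dMk_eq, H0|]; lra).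
    intros s t Hs Ht. rewrite Hz in *. replace (s - t) with 0 by lra. rewrite Rabs_R0; auto.
Qed.

Lemma tri_pts k (Hk : 0 < k) (A B C : R) :
  0 <= A < PI/2 -> 0 <= B < PI/2 -> 0 <= C < PI/2 ->
  B <= A + C -> A <= B + C -> C <= A + B ->
  exists x' y' z' : Mk k,
    k * dot3 (proj1_sig x') (proj1_sig y') = cos A /\
    k * dot3 (proj1_sig y') (proj1_sig z') = cos B /\
    k * dot3 (proj1_sig z') (proj1_sig x') = cos C.
Proof.
  intros HA HB HC T1 T2 T3. assert (Hsk := sk_pos k Hk). assert (Hkk := sk_sq k Hk).
  set (r := / sqrt k).
  assert (Hr : r * r = / k) by (unfold r; replace (/k) with (/(sqrt k * sqrt k)) by (rewrite Hkk; auto); field; lra).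
  assert (Hkr : k * (r*r) = 1) by (rewrite Hr; field; lra).
  assert (HsA := sin2_cos2 A). assert (HsC := sin2_cos2 C). unfold Rsqr in HsA, HsC.
  set (cp := if Req_EM_T (sin A * sin C) 0 then 1 else (cos B - cos A * cos C)/(sin A * sin C)).
  assert (Hcp : -1 <= cp <= 1).
  { unfold cp; destruct (Req_EM_T (sin A * sin C) 0) as [E|E]; [lra|].
    assert (P1 : 0 < sin A). { apply sin_gt_0; [|lra]. destruct (Req_dec A 0); [subst; rewrite sin_0 in E; lra| lra]. }
    assert (P2 : 0 < sin C). { apply sin_gt_0; [|lra]. destruct (Req_dec C 0); [subst; rewrite sin_0 in E; lra| lra]. }
    assert (Q1 : cos (A + C) <= cos B) by (apply cos_decr_1; lra).
    assert (Q2 : cos B <= cos (Rabs (A - C))) by (unfold Rabs; destruct Rcase_abs; apply cos_decr_1; lra).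
    assert (Q3 : cos (Rabs (A - C)) = cos (A - C)) by (unfold Rabs; destruct Rcase_abs; [rewrite <- cos_neg; f_equal; ring|auto]).
    rewrite Q3, cos_minus in Q2. rewrite cos_plus in Q1.
    split; [apply (Rmult_le_reg_r (sin A * sin C)); [nra|] | apply (Rmult_le_reg_r (sin A * sin C)); [nra|]];
      unfold Rdiv; rewrite Rmult_assoc, Rinv_l by lra; lra. }
  set (sp := sqrt (1 - cp*cp)).
  assert (Hsp : sp * sp = 1 - cp*cp) by (apply sqrt_sqrt; nra).
  assert (Hx : dot3 (r, 0, 0) (r, 0, 0) = / k) by (simpl; rewrite <- Hr; ring).
  assert (Hy : dot3 (r * cos A, r * sin A, 0) (r * cos A, r * sin A, 0) = / k)
    by (simpl; rewrite <- Hr; transitivity (r*r*(sin A * sin A + cos A * cos A)); [ring| rewrite HsA; ring]).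
  assert (Hz : dot3 (r * cos C, r * sin C * cp, r * sin C * sp) (r * cos C, r * sin C * cp, r * sin C * sp) = / k).
  { simpl; rewrite <- Hr. transitivity (r*r*(sin C * sin C * (cp*cp + sp*sp) + cos C * cos C)); [ring|].
    rewrite Hsp. replace (cp * cp + (1 - cp * cp)) with 1 by ring. rewrite Rmult_1_r, HsC; ring. }
  exists (exist (fun v => dot3 v v = /k) _ Hx), (exist (fun v => dot3 v v = /k) _ Hy), (exist (fun v => dot3 v v = /k) _ Hz); simpl. refine (conj _ (conj _ _)).
  - transitivity (k*(r*r)*cos A); [ring|rewrite Hkr; ring].
  - transitivity (k*(r*r)*(cos A * cos C + sin A * sin C * cp)); [ring|rewrite Hkr, Rmult_1_l].
    unfold cp; destruct (Req_EM_T (sin A * sin C) 0) as [E|E].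
    + destruct (Req_dec A 0) as [->|NA].
      * rewrite sin_0, cos_0. replace B with C by lra. ring.
      * assert (0 < sin A) by (apply sin_gt_0; lra).
        assert (sin C = 0) by (apply (Rmult_eq_reg_l (sin A)); lra).
        destruct (Req_dec C 0) as [->|NC]. rewrite cos_0, sin_0. replace B with A by lra. ring.
        assert (0 < sin C) by (apply sin_gt_0; lra). lra.
    + field. split; intro Z; apply E; rewrite Z; ring.
  - transitivity (k*(r*r)*cos C); [ring|rewrite Hkr; ring].
Qed.

Definition HK (k : R) {X : Type} (d : X -> X -> R) : Prop :=
  0 < k /\ CAT k d /\ (forall v w, d v w < PI / (2 * sqrt k)).


Lemma HK_met k X (d : X -> X -> R) : HK k d -> is_metric d.
Proof. intros [_ [[H _] _]]; auto. Qed.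

Lemma HK_rng k X (d : X -> X -> R) : HK k d -> forall v w, 0 <= sqrt k * d v w < PI/2.
Proof. intros [Hk [[[Hnn _] _] Hd]] v w. assert (Hs := sk_pos k Hk). specialize (Hd v w). specialize (Hnn v w).
  split. nra. apply (Rmult_lt_compat_l (sqrt k)) in Hd; auto.
  replace (sqrt k * (PI / (2 * sqrt k))) with (PI/2) in Hd by (field; lra). lra. Qed.

Lemma HK_geo k X (d : X -> X -> R) : HK k d -> forall v w, exists g, geodesic d v w g.
Proof. intros [Hk [[_ [Hg _]] Hd]] v w. apply Hg. assert (Hs := sk_pos k Hk).
  specialize (Hd v w). assert (PI / (2 * sqrt k) < PI / sqrt k).
  { unfold Rdiv. apply Rmult_lt_compat_l. apply PI_RGT_0. rewrite Rinv_mult. 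
    assert (0 < / sqrt k) by (apply Rinv_0_lt_compat; auto). lra. } lra. Qed.

Lemma dMk_of k (Hk : 0 < k) (P Q : Mk k) a : 0 <= a <= PI ->
  k * dot3 (proj1_sig P) (proj1_sig Q) = cos a -> dMk k P Q = a / sqrt k.
Proof. intros Ha E. unfold dMk. rewrite E, acos_cos by auto. assert (Hs := sk_pos k Hk). field; lra. Qed.

Lemma SC k X (d : X -> X -> R) (H : HK k d) p y xx g t :
  geodesic d p y g -> 0 < d p y -> 0 <= t <= 1 ->
  sin ((1-t)*(sqrt k*d p y)) * cos (sqrt k * d p xx) + sin (t*(sqrt k*d p y)) * cos (sqrt k*d y xx)
  <= sin (sqrt k*d p y) * cos (sqrt k * d (g (t * d p y)) xx).
Proof.
  intros Hg Hpy Ht. assert (Hr := HK_rng k X d H). assert (Hgeo := HK_geo k X d H).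
  destruct H as [Hk [[[Hnn [Hz [Hs Htr]]] [_ Hcat]] Hd]].
  assert (Hsk := sk_pos k Hk). assert (Hpi := PI_RGT_0).
  set (A := sqrt k * d p y). set (B := sqrt k * d y xx). set (C := sqrt k * d xx p).
  destruct (Hgeo y xx) as [g2 Hg2]. destruct (Hgeo xx p) as [g3 Hg3].
  assert (HA := Hr p y). assert (HB := Hr y xx). assert (HC := Hr xx p). fold A B C in HA, HB, HC.
  assert (T1 : B <= A + C).
  { unfold A, B, C. rewrite <- Rmult_plus_distr_l. apply Rmult_le_compat_l; [lra|].
    rewrite (Hs xx p). specialize (Htr y p xx). rewrite (Hs y p) in Htr. lra. }
  assert (T2 : A <= B + C).
  { unfold A, B, C. rewrite <- Rmult_plus_distr_l. apply Rmult_le_compat_l; [lra|].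
    rewrite (Hs xx p). specialize (Htr p xx y). rewrite (Hs xx y) in Htr. lra. }
  assert (T3 : C <= A + B).
  { unfold A, B, C. rewrite <- Rmult_plus_distr_l. apply Rmult_le_compat_l; [lra|].
    specialize (Htr xx y p). rewrite (Hs xx y), (Hs y p) in Htr. lra. }
  destruct (tri_pts k Hk A B C HA HB HC T1 T2 T3) as [x' [y' [z' [E1 [E2 E3]]]]].
  assert (D1 : dMk k x' y' = d p y) by (rewrite (dMk_of k Hk _ _ A) by (auto; lra); unfold A; field; lra).
  assert (D2 : dMk k y' z' = d y xx) by (rewrite (dMk_of k Hk _ _ B) by (auto; lra); unfold B; field; lra).
  assert (D3 : dMk k z' x' = d xx p) by (rewrite (dMk_of k Hk _ _ C) by (auto; lra); unfold C; field; lra).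
  assert (Hlt : forall v w, d v w < PI / sqrt k).
  { intros v w. specialize (Hd v w). assert (PI / (2 * sqrt k) < PI / sqrt k); [|lra].
    unfold Rdiv. apply Rmult_lt_compat_l. apply PI_RGT_0. rewrite Rinv_mult.
    assert (0 < / sqrt k) by (apply Rinv_0_lt_compat; auto). lra. }
  assert (Hacos : acos (k * dot3 (proj1_sig x') (proj1_sig y')) = A) by (rewrite E1; apply acos_cos; lra).
  destruct (slerp_geod k Hk x' y') as [h1 [Hh1 Fh1]]. { rewrite Hacos. assert (0 < A) by (unfold A; nra). lra. }
  destruct (geod_any k Hk y' z') as [h2 Hh2]. { rewrite D2; auto. }
  destruct (geod_any k Hk z' x') as [h3 Hh3]. { rewrite D3; auto. }
  assert (Hper : d p y + d y xx + d xx p < 2 * PI / sqrt k).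
  { assert (Hd1 := Hd p y); assert (Hd2 := Hd y xx); assert (Hd3 := Hd xx p).
    assert (E : 2 * PI / sqrt k = 4 * (PI / (2 * sqrt k))) by (field; lra).
    assert (0 < PI / (2 * sqrt k)) by (apply Rdiv_lt_0_compat; [apply PI_RGT_0| lra]). lra. }
  specialize (Hcat p y xx g g2 g3 Hg Hg2 Hg3 Hper x' y' z' h1 h2 h3 D1 D2 D3 Hh1 Hh2 Hh3 S1 S3
     (t * d p y) 0).
  simpl in Hcat.
  assert (Hnp := Hnn xx p).
  specialize (Hcat ltac:(nra) ltac:(lra)).
  destruct Hg3 as [Hg30 _]. destruct Hh3 as [Hh30 _]. rewrite Hg30, Hh30 in Hcat.
  set (s := t * d p y) in *.
  assert (Fs := Fh1 s (proj1_sig z')).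
  rewrite Hacos, E1 in Fs. rewrite (dot_sym (proj1_sig x') (proj1_sig z')) in Fs.
  rewrite E2, E3 in Fs.
  set (K := k * dot3 (proj1_sig (h1 s)) (proj1_sig z')) in *.
  assert (HK : -1 <= K <= 1) by (unfold K; destruct (h1 s), z'; apply kdot_bd; auto).
  assert (Hle : sqrt k * d (g s) xx <= acos K).
  { unfold dMk in Hcat. fold K in Hcat. apply (Rmult_le_compat_l (sqrt k)) in Hcat; [|lra].
    replace (sqrt k * (/ sqrt k * acos K)) with (acos K) in Hcat by (field; lra). exact Hcat. }
  assert (Hcos : K <= cos (sqrt k * d (g s) xx)).
  { assert (Hb := acos_bound K). assert (0 <= sqrt k * d (g s) xx) by (apply Rmult_le_pos; [lra|apply Hnn]).
    rewrite <- (cos_acos K) at 1 by auto. apply cos_decr_1; lra. }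
  assert (HA0 : 0 < A) by (unfold A; nra). assert (Hsa : 0 < sin A) by (apply sin_gt_0; lra).
  replace (sqrt k * s) with (t * A) in Fs by (unfold s, A; ring).
  replace ((1 - t) * A) with (A - t * A) by ring. rewrite sin_minus.
  fold A. replace (sqrt k * d p xx) with C by (unfold C; rewrite Hs; auto). fold B.
  assert (E : sin A * K = sin A * cos (t * A) * cos C - cos A * sin (t * A) * cos C + sin (t * A) * cos B)
    by (rewrite Fs; field; lra).
  apply (Rmult_le_compat_l (sin A)) in Hcos; lra.
Qed.

Lemma Rdiv_le_0_compat a b : 0 <= a -> 0 < b -> 0 <= a / b.
Proof. intros. unfold Rdiv. apply Rmult_le_pos; auto. left; apply Rinv_0_lt_compat; auto. Qed.

Lemma lim0 A B Cc : 0 <= Cc -> (forall t, 0 < t <= 1 -> A <= B + t * Cc) -> A <= B.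
Proof. intros HC H. destruct (Rle_dec A B) as [|N]; auto. exfalso.
  set (t := (A - B) / ((A - B) + Cc)).
  assert (Ht : 0 < t <= 1).
  { unfold t; split. apply Rdiv_lt_0_compat; lra.
    apply (Rmult_le_reg_r ((A - B) + Cc)); [lra|]. unfold Rdiv; rewrite Rmult_assoc, Rinv_l by lra. lra. }
  specialize (H t Ht).
  assert (E : t * ((A - B) + Cc) = A - B) by (unfold t; field; lra).
  assert (t * Cc < A - B). { assert (t * (A - B) > 0) by (apply Rmult_lt_0_compat; lra). nra. }
  lra. Qed.

Lemma SL th c a : 0 < th < PI/2 -> 0 <= c ->
  (forall t, 0 < t <= 1 -> sin (t*th) * a <= sin th * c * (1 - cos (t*th))) -> a <= 0.
Proof. intros Hth Hc H. assert (Hpi := PI_RGT_0).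
  assert (Hst : 0 < sin th) by (apply sin_gt_0; lra).
  assert (G : forall t, 0 < t <= 1 -> a <= 0 + t * (sin th * c * th)).
  { intros t Ht. specialize (H t Ht).
    assert (Hu : 0 < sin (t*th)) by (apply sin_gt_0; nra).
    assert (Hcu : 0 <= cos (t*th)) by (apply cos_ge_0; nra).
    assert (E1 := one_minus_cos_le (t*th) Hcu).
    assert (E2 := sin_le_id (t*th) ltac:(nra)).
    assert (sin (t*th) * a <= sin th * c * (sin (t*th))^2).
    { eapply Rle_trans; [exact H|]. apply Rmult_le_compat_l; [nra|lra]. }
    assert (a <= sin th * c * sin (t*th)).
    { apply (Rmult_le_reg_l (sin (t*th))); auto. nra. }
    assert (sin th * c * sin (t*th) <= sin th * c * (t*th)) by (apply Rmult_le_compat_l; nra).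
    nra. }
  apply (lim0 a 0 (sin th * c * th)); auto. apply Rmult_le_pos; [apply Rmult_le_pos|]; lra. Qed.

Lemma sin_sum_ge x y : 0 <= x <= PI -> 0 <= y <= PI -> sin (x + y) <= sin x + sin y.
Proof. intros Hx Hy. rewrite sin_plus.
  assert (sin x >= 0) by (apply Rle_ge, sin_ge_0; lra). assert (sin y >= 0) by (apply Rle_ge, sin_ge_0; lra).
  assert (H1 := COS_bound x). assert (H2 := COS_bound y). nra. Qed.

Definition psi k c := (/ c - c) / k.

Lemma psi_diff k c L : 0 < k -> 0 < c -> 0 < L -> psi k L - psi k c = (c - L) * (1 + / (L * c)) / k.
Proof. intros; unfold psi; field; lra. Qed.

Lemma psi_decr k x y : 0 < k -> 0 < x -> x <= y -> psi k y <= psi k x.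
Proof. intros Hk Hx Hxy. unfold psi. unfold Rdiv. apply Rmult_le_compat_r. left; apply Rinv_0_lt_compat; auto.
  assert (/ y <= / x) by (apply Rinv_le_contravar; auto). lra. Qed.

Lemma KE k th c b Del :
  0 < k -> 0 < th < PI/2 -> 0 < c <= 1 -> 0 < b <= 1 -> 0 <= Del ->
  (forall t, 0 < t <= 1 ->
     t * Del <= psi k ((sin ((1-t)*th) * c + sin (t*th) * b) / sin th) - psi k c) ->
  b <= cos th * c /\ Del <= 3 * (1 + / (b*b)) / k * (cos th - b).
Proof.
  intros Hk Hth Hc Hb HD H. assert (Hpi := PI_RGT_0).
  assert (Hst : 0 < sin th) by (apply sin_gt_0; lra).
  assert (Hcth : 0 <= cos th) by (apply cos_ge_0; lra).
  set (a := b - cos th * c).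
  assert (HL : forall t, 0 < t <= 1 -> (sin ((1-t)*th) * c + sin (t*th) * b) / sin th
       = c * cos (t*th) + a * sin (t*th) / sin th).
  { intros t Ht. replace ((1-t)*th) with (th - t*th) by ring. rewrite sin_minus. unfold a. field; lra. }
  assert (Hmin : forall t, 0 < t <= 1 -> Rmin b c <= (sin ((1-t)*th) * c + sin (t*th) * b) / sin th).
  { intros t Ht. assert (S1 : 0 <= sin ((1-t)*th)) by (apply sin_ge_0; nra).
    assert (S2 : 0 <= sin (t*th)) by (apply sin_ge_0; nra).
    assert (S3 := sin_sum_ge ((1-t)*th) (t*th) ltac:(nra) ltac:(nra)).
    replace ((1-t)*th + t*th) with th in S3 by ring.
    assert (Rmin b c <= b) by apply Rmin_l. assert (Rmin b c <= c) by apply Rmin_r.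
    apply (Rmult_le_reg_r (sin th)); auto. unfold Rdiv; rewrite Rmult_assoc, Rinv_l by lra.
    rewrite Rmult_1_r. assert (0 < Rmin b c) by (apply Rmin_glb_lt; lra).
    assert (Rmin b c * sin th <= Rmin b c * (sin ((1-t)*th) + sin (t*th))) by (apply Rmult_le_compat_l; lra).
    nra. }
  assert (Hmp : 0 < Rmin b c) by (apply Rmin_glb_lt; lra).
  assert (Ha : a <= 0).
  { apply (SL th c a Hth ltac:(lra)). intros t Ht. specialize (H t Ht).
    assert (HLp := Hmin t Ht). rewrite HL in HLp, H by auto.
    set (L := c * cos (t*th) + a * sin (t*th) / sin th) in *.
    rewrite psi_diff in H by lra.
    assert (0 <= (c - L) * (1 + / (L * c)) / k) by (eapply Rle_trans; [|exact H]; nra).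
    assert (0 < (1 + / (L * c)) / k).
    { apply Rdiv_lt_0_compat; auto. assert (0 < / (L*c)) by (apply Rinv_0_lt_compat; nra). lra. }
    assert (0 <= c - L).
    { destruct (Rle_dec 0 (c - L)); auto. exfalso.
      assert ((c - L) * (1 + / (L * c)) / k < 0); [|lra].
      unfold Rdiv in *. rewrite Rmult_assoc. nra. }
    unfold L in *. apply (Rmult_le_reg_r (/ sin th)). apply Rinv_0_lt_compat; auto.
    replace (sin th * c * (1 - cos (t * th)) * / sin th) with (c * (1 - cos (t*th))) by (field; lra).
    lra. }
  split. unfold a in Ha; lra.
  assert (Hbc : b <= c) by (unfold a in Ha; assert (Hcb := COS_bound th); nra).
  assert (Hmin2 : Rmin b c = b) by (apply Rmin_left; auto).
  set (M := 1 + / (b * c)).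
  assert (HM : 0 < M) by (unfold M; assert (0 < /(b*c)) by (apply Rinv_0_lt_compat; nra); lra).
  assert (G : forall t, 0 < t <= 1 -> Del * k <= (- a) * th / sin th * M + t * (c * th^2 * M)).
  { intros t Ht. specialize (H t Ht). assert (HLp := Hmin t Ht). rewrite Hmin2 in HLp.
    rewrite HL in HLp, H by auto.
    set (L := c * cos (t*th) + a * sin (t*th) / sin th) in *.
    rewrite psi_diff in H by lra.
    assert (HML : 1 + / (L * c) <= M).
    { unfold M. assert (/ (L*c) <= / (b*c)) by (apply Rinv_le_contravar; nra). lra. }
    assert (Hu : 0 < sin (t*th)) by (apply sin_gt_0; nra).
    assert (Hcu : 0 <= cos (t*th)) by (apply cos_ge_0; nra).
    assert (E1 := one_minus_cos_le (t*th) Hcu).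
    assert (E2 := sin_le_id (t*th) ltac:(nra)).
    assert (Hcl : c - L = c * (1 - cos (t*th)) + (-a) * sin (t*th) / sin th) by (unfold L; field; lra).
    assert (P1 : 0 <= c * (1 - cos (t*th))) by (assert (H1 := COS_bound (t*th)); nra).
    assert (P2 : 0 <= (-a) * sin (t*th) / sin th) by (apply Rdiv_le_0_compat; nra).
    assert (Q1 : c * (1 - cos (t*th)) <= c * (t*th)^2).
    { apply Rmult_le_compat_l; [lra|]. assert (0 <= sin (t*th)) by lra. nra. }
    assert (Q2 : (-a) * sin (t*th) / sin th <= (-a) * (t*th) / sin th).
    { unfold Rdiv. apply Rmult_le_compat_r; [left; apply Rinv_0_lt_compat; auto|]. nra. }
    assert (Hk' : t * Del * k <= (c - L) * (1 + / (L * c))).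
    { apply (Rmult_le_reg_r (/k)). apply Rinv_0_lt_compat; auto.
      replace (t * Del * k * / k) with (t * Del) by (field; lra). exact H. }
    assert (Hk'' : t * Del * k <= (c * (t*th)^2 + (-a) * (t*th) / sin th) * M).
    { eapply Rle_trans; [exact Hk'|]. rewrite Hcl.
      apply Rmult_le_compat; try lra. assert (0 < /(L*c)) by (apply Rinv_0_lt_compat; nra). lra. }
    apply (Rmult_le_reg_l t); [lra|].
    eapply Rle_trans. 2: { right. symmetry. 
      replace (t * ((- a) * th / sin th * M + t * (c * th ^ 2 * M))) with
        ((c * (t*th)^2 + (-a) * (t*th) / sin th) * M) by (field; lra). reflexivity. }
    lra. }
  assert (Del * k <= (- a) * th / sin th * M).
  { apply (lim0 _ _ (c * th^2 * M)); auto. apply Rmult_le_pos; [|lra]. apply Rmult_le_pos; [lra|]. nra. }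
  assert (Hs3 := sin_ge_third th ltac:(lra) ltac:(lra)).
  assert (th / sin th <= 3).
  { apply (Rmult_le_reg_r (sin th)); auto. unfold Rdiv; rewrite Rmult_assoc, Rinv_l by lra. lra. }
  assert (M <= 1 + / (b*b)).
  { unfold M. assert (/ (b*c) <= / (b*b)) by (apply Rinv_le_contravar; nra). lra. }
  assert (Hna : - a <= cos th - b) by (unfold a; nra).
  assert (Hna0 : 0 <= -a) by lra.
  apply (Rmult_le_reg_r k); auto.
  replace (3 * (1 + / (b * b)) / k * (cos th - b) * k) with (3 * (1 + / (b * b)) * (cos th - b)) by (field; lra).
  eapply Rle_trans; [eassumption|].
  replace ((- a) * th / sin th * M) with ((th / sin th) * M * (-a)) by (field; lra).
  apply Rmult_le_compat; try lra.
  - apply Rmult_le_pos; [|lra]. apply Rdiv_le_0_compat; lra.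
  - apply Rmult_le_compat; try lra. apply Rdiv_le_0_compat; lra.
Qed.

Definition SEQ k {X} (d : X -> X -> R) (f : X -> Rbar) (lam : nat -> R) (x : nat -> X) :=
  HK k d /\ proper_fun f /\ convex_fun d f /\ (forall n, 0 < lam n) /\
  (forall n y, Rbar_le (Rbar_plus (f (x (S n))) (Finite (/ lam n * Psi k d (x n) (x (S n)))))
             (Rbar_plus (f y) (Finite (/ lam n * Psi k d (x n) y)))).

Lemma min_fin X (f : X -> Rbar) z : proper_fun f -> is_min_point f z -> f z = Finite (real (f z)).
Proof. intros [Hm [x1 Hx1]] Hz. specialize (Hz x1). destruct (f z) eqn:E; auto.
  - destruct (f x1); simpl in Hz; try tauto. - exfalso; apply (Hm z); auto. Qed.

Lemma cos_pos k X (d : X -> X -> R) : HK k d -> forall u v, 0 < cos (sqrt k * d u v) <= 1.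
Proof. intros H u v. assert (Hr := HK_rng k X d H u v). split. apply cos_gt_0; lra. apply COS_bound. Qed.

Lemma Psi_eq k X (d : X -> X -> R) : HK k d -> forall u v, Psi k d u v = psi k (cos (sqrt k * d v u)).
Proof. intros H u v. assert (Hc := cos_pos k X d H v u). destruct H as [Hk _].
  unfold Psi, psi. field. lra. Qed.

Lemma Psi_nn k X (d : X -> X -> R) : HK k d -> forall u v, 0 <= Psi k d u v.
Proof. intros H u v. rewrite (Psi_eq k X d H). assert (Hc := cos_pos k X d H v u). destruct H as [Hk _].
  unfold psi. apply Rdiv_le_0_compat; auto. set (c := cos (sqrt k * d v u)) in *.
  assert (1 <= / c). { rewrite <- Rinv_1. apply Rinv_le_contravar; lra. } lra. Qed.

Lemma Psi_0 k X (d : X -> X -> R) : HK k d -> forall u, Psi k d u u = 0.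
Proof. intros H u. rewrite (Psi_eq k X d H). destruct (HK_met k X d H) as [_ [Hz _]].
  rewrite (proj2 (Hz u u) eq_refl), Rmult_0_r, cos_0. unfold psi. destruct H; field; lra. Qed.

Lemma next_fin k X d f lam x : @SEQ k X d f lam x -> (exists z, is_min_point f z) ->
  forall n, f (x (S n)) = Finite (real (f (x (S n)))).
Proof. intros [H [Hp [_ [_ Hr]]]] [z Hz] n. specialize (Hr n z). rewrite (min_fin X f z Hp Hz) in Hr.
  destruct (f (x (S n))) eqn:E; auto. simpl in Hr. tauto. exfalso; apply (proj1 Hp (x (S n))); auto. Qed.

Lemma FEJ k X d f lam x (HS : @SEQ k X d f lam x) z (Hz : is_min_point f z) n :
  cos (sqrt k * d z (x n)) <= cos (sqrt k * d z (x (S n))) /\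
  lam n * (real (f (x (S n))) - real (f z)) <=
    3 * (1 + / (cos (sqrt k * d z (x n)) * cos (sqrt k * d z (x n)))) / k *
      (cos (sqrt k * d z (x (S n))) - cos (sqrt k * d z (x n))).
Proof.
  assert (Hfp := next_fin k X d f lam x HS (ex_intro _ z Hz) n).
  destruct HS as [H [Hp [Hcv [Hl Hr]]]].
  assert (Hfz := min_fin X f z Hp Hz).
  assert (Hmet := HK_met k X d H). destruct Hmet as [Hnn [Hzr [Hs Ht]]].
  assert (Hk : 0 < k) by (destruct H; auto). assert (Hsk := sk_pos k Hk). assert (Hpi := PI_RGT_0).
  set (p := x (S n)) in *. set (xx := x n) in *.
  set (m := real (f z)) in *. set (fp := real (f p)) in *.
  set (b := cos (sqrt k * d z xx)).
  assert (Hb := cos_pos k X d H z xx). fold b in Hb.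
  assert (Hmfp : m <= fp) by (specialize (Hz p); rewrite Hfz, Hfp in Hz; exact Hz).
  assert (HK0 : 0 <= 3 * (1 + / (b * b)) / k).
  { apply Rdiv_le_0_compat; auto. assert (0 < / (b*b)) by (apply Rinv_0_lt_compat; nra). lra. }
  destruct (Req_dec (d p z) 0) as [E0|E0].
  - assert (Epz : p = z) by (apply Hzr; auto).
    assert (Efm : fp = m) by (unfold fp, m; rewrite Epz; auto). rewrite Efm, Rminus_diag, Rmult_0_r.
    rewrite Epz, (proj2 (Hzr z z) eq_refl), Rmult_0_r, cos_0.
    split; [lra|]. apply Rmult_le_pos; lra.
  - assert (Hpz : 0 < d p z) by (specialize (Hnn p z); lra).
    destruct (HK_geo k X d H p z) as [g Hg].
    set (th := sqrt k * d p z).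
    assert (Hth : 0 < th < PI/2) by (assert (Hr2 := HK_rng k X d H p z); unfold th; split; [nra|lra]).
    set (c := cos (sqrt k * d p xx)).
    assert (Hc := cos_pos k X d H p xx). fold c in Hc.
    destruct (KE k th c b (lam n * (fp - m)) Hk Hth Hc Hb) as [K1 K2].
    + apply Rmult_le_pos; [left; apply Hl|lra].
    + intros t Htt.
      set (w := g (t * d p z)).
      assert (Hrw := Hr n w). assert (Hcw := Hcv p z g t Hg ltac:(clear -Htt; lra)). fold w in Hcw.
      rewrite Hfp, Hfz in Hcw. simpl in Hcw.
      destruct (f w) as [fw| |] eqn:Ew; [| simpl in Hcw; tauto | exfalso; apply (proj1 Hp w); auto].
      fold p xx in Hrw. rewrite Hfp in Hrw. simpl in Hrw.
      rewrite !(Psi_eq k X d H) in Hrw. fold c in Hrw. fold xx in Hrw.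
      assert (Hsc := SC k X d H p z xx g t Hg Hpz ltac:(lra)). fold th in Hsc. fold w in Hsc. fold c b in Hsc.
      assert (Hst : 0 < sin th) by (apply sin_gt_0; lra).
      assert (HLp : 0 < (sin ((1 - t) * th) * c + sin (t * th) * b) / sin th).
      { apply Rdiv_lt_0_compat; auto. assert (0 <= sin ((1-t)*th)) by (apply sin_ge_0; nra).
        assert (0 < sin (t*th)) by (apply sin_gt_0; nra). nra. }
      assert (HLw : (sin ((1 - t) * th) * c + sin (t * th) * b) / sin th <= cos (sqrt k * d w xx)).
      { apply (Rmult_le_reg_r (sin th)); auto. unfold Rdiv; rewrite Rmult_assoc, Rinv_l by lra. lra. }
      assert (Hpsi := psi_decr k _ _ Hk HLp HLw).
      assert (Hln := Hl n).
      simpl in Hcw. assert (E1 : t * (fp - m) <= / lam n * (psi k (cos (sqrt k * d w xx)) - psi k c)) by (rewrite Rmult_minus_distr_l; nra).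
      assert (E2 : t * (lam n * (fp - m)) <= psi k (cos (sqrt k * d w xx)) - psi k c).
      { apply (Rmult_le_compat_l (lam n)) in E1; [|lra].
        replace (lam n * (/ lam n * (psi k (cos (sqrt k * d w xx)) - psi k c))) with
          (psi k (cos (sqrt k * d w xx)) - psi k c) in E1 by (field; lra). nra. }
      lra.
    + unfold th in K1, K2. rewrite (Hs p z) in K1, K2.
      assert (cos (sqrt k * d z p) >= 0) by (apply Rle_ge, cos_ge_0; assert (Hr2 := HK_rng k X d H z p); lra).
      split; [nra|]. exact K2.
Qed.

Lemma FEJd k X d f lam x (HS : @SEQ k X d f lam x) z (Hz : is_min_point f z) n :
  d z (x (S n)) <= d z (x n).
Proof. destruct (FEJ k X d f lam x HS z Hz n) as [H1 _]. destruct HS as [H _].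
  assert (R1 := HK_rng k X d H z (x n)). assert (R2 := HK_rng k X d H z (x (S n))).
  assert (Hk : 0 < k) by (destruct H; auto). assert (Hsk := sk_pos k Hk).
  assert (Hpi := PI_RGT_0).
  assert (sqrt k * d z (x (S n)) <= sqrt k * d z (x n)) by (apply cos_decr_0; lra).
  apply (Rmult_le_reg_l (sqrt k)); auto. Qed.

Lemma FEJd0 k X d f lam x (HS : @SEQ k X d f lam x) z (Hz : is_min_point f z) n :
  d z (x n) <= d z (x 0%nat).
Proof. induction n. lra. eapply Rle_trans; [apply (FEJd k X d f lam x HS z Hz)|auto]. Qed.

Lemma FEJc0 k X d f lam x (HS : @SEQ k X d f lam x) z (Hz : is_min_point f z) n :
  cos (sqrt k * d z (x 0%nat)) <= cos (sqrt k * d z (x n)).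
Proof. induction n. lra. eapply Rle_trans; [apply IHn|apply (FEJ k X d f lam x HS z Hz)]. Qed.

Lemma E_mono k X d f lam x (HS : @SEQ k X d f lam x) (Hex : exists z, is_min_point f z) n :
  real (f (x (S (S n)))) <= real (f (x (S n))).
Proof. assert (F1 := next_fin k X d f lam x HS Hex n). assert (F2 := next_fin k X d f lam x HS Hex (S n)).
  destruct HS as [H [_ [_ [Hl Hr]]]]. specialize (Hr (S n) (x (S n))).
  rewrite F1, F2 in Hr. simpl in Hr. rewrite (Psi_0 k X d H) in Hr.
  assert (0 <= / lam (S n) * Psi k d (x (S n)) (x (S (S n)))).
  { apply Rmult_le_pos. left; apply Rinv_0_lt_compat; auto. apply (Psi_nn k X d H). }
  lra. Qed.

Lemma E_mono2 k X d f lam x (HS : @SEQ k X d f lam x) (Hex : exists z, is_min_point f z) i j :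
  (i <= j)%nat -> real (f (x (S j))) <= real (f (x (S i))).
Proof. induction 1. lra. eapply Rle_trans; [apply (E_mono k X d f lam x HS Hex)|auto]. Qed.

Lemma f_conv k X d f lam x (HS : @SEQ k X d f lam x) z (Hz : is_min_point f z) :
  is_lim_seq (sum_n lam) p_infty ->
  forall eps, 0 < eps -> exists N, forall n, (N <= n)%nat -> Rbar_le (f (x n)) (Finite (real (f z) + eps)).
Proof.
  intros Hlim eps Heps.
  assert (Hex : exists z, is_min_point f z) by eauto.
  assert (HS' := HS). destruct HS' as [H [Hp [_ [Hl _]]]].
  assert (Hk : 0 < k) by (destruct H; auto).
  set (m := real (f z)).
  set (c := fun n => cos (sqrt k * d z (x n))).
  assert (Hc0 : 0 < c 0%nat) by (apply (cos_pos k X d H)).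
  assert (Hc1 : forall n, c n <= 1) by (intros; apply (cos_pos k X d H)).
  set (K := 3 * (1 + / (c 0%nat * c 0%nat)) / k).
  assert (HK0 : 0 < K).
  { unfold K. apply Rdiv_lt_0_compat; auto. assert (0 < /(c 0%nat * c 0%nat)) by (apply Rinv_0_lt_compat; nra). lra. }
  set (e := fun n => real (f (x (S n))) - m).
  assert (He0 : forall n, 0 <= e n).
  { intros n. unfold e. assert (Fz := min_fin X f z Hp Hz). assert (Hz' := Hz (x (S n))). rewrite Fz in Hz'.
    rewrite (next_fin k X d f lam x HS Hex n) in Hz'. simpl in Hz'. unfold m. lra. }
  assert (Hstep : forall n, lam n * e n <= K * (c (S n) - c n)).
  { intros n. destruct (FEJ k X d f lam x HS z Hz n) as [A B]. fold (c n) (c (S n)) in A, B.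
    unfold e, m. eapply Rle_trans; [exact B|]. apply Rmult_le_compat_r; [lra|].
    unfold K. unfold Rdiv. apply Rmult_le_compat_r; [left; apply Rinv_0_lt_compat; auto|].
    apply Rmult_le_compat_l; [lra|]. apply Rplus_le_compat_l.
    assert (c 0%nat <= c n) by apply (FEJc0 k X d f lam x HS z Hz n).
    apply Rinv_le_contravar; nra. }
  assert (Hsum : forall N, sum_f_R0 (fun n => lam n * e n) N <= K * (c (S N) - c 0%nat)).
  { induction N; simpl. apply Hstep. specialize (Hstep (S N)). lra. }
  apply is_lim_seq_spec in Hlim. destruct (Hlim (K / eps)) as [N HN].
  specialize (HN N (Nat.le_refl N)). rewrite sum_n_Reals in HN.
  assert (HeN : e N <= eps).
  { destruct (Rle_dec (e N) eps) as [|Hn]; auto. exfalso.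
    assert (G : sum_f_R0 (fun n => lam n * eps) N <= sum_f_R0 (fun n => lam n * e n) N).
    { apply sum_Rle. intros n Hn'. apply Rmult_le_compat_l; [left; apply Hl|].
      assert (e N <= e n) by (unfold e; apply Rplus_le_compat_r, (E_mono2 k X d f lam x HS Hex); auto). lra. }
    rewrite <- scal_sum in G. specialize (Hsum N). assert (c (S N) <= 1) by apply Hc1.
    assert (eps * sum_f_R0 lam N <= K) by nra.
    apply (Rmult_lt_compat_l eps) in HN; auto. replace (eps * (K / eps)) with K in HN by (field; lra). lra. }
  exists (S N). intros n Hn. destruct n as [|n]; [lia|].
  rewrite (next_fin k X d f lam x HS Hex n). simpl.
  assert (e n <= e N) by (unfold e; apply Rplus_le_compat_r, (E_mono2 k X d f lam x HS Hex); lia).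
  unfold e, m in *. lra.
Qed.

Lemma LS_fin (a : nat -> R) B : (forall n, 0 <= a n <= B) ->
  is_LimSup_seq a (Finite (real (LimSup_seq a))) /\ LimSup_seq a = Finite (real (LimSup_seq a)).
Proof. intros Hb. destruct (ex_LimSup_seq a) as [l Hl]. rewrite (is_LimSup_seq_unique _ _ Hl).
  destruct l as [l| |]; simpl in *; auto.
  - destruct (Hl (B+1) 0%nat) as [n [_ Hn]]. specialize (Hb n). lra.
  - destruct (Hl (-1)) as [N HN]. specialize (HN N (Nat.le_refl _)). specialize (Hb N). lra. Qed.

Lemma LS_up (a : nat -> R) L : is_LimSup_seq a (Finite L) ->
  forall eps, 0 < eps -> exists N, forall n, (N <= n)%nat -> a n < L + eps.
Proof. intros H eps He. exact (proj2 (H (mkposreal eps He))). Qed.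

Lemma LS_freq (a : nat -> R) L : is_LimSup_seq a (Finite L) ->
  forall eps, 0 < eps -> forall N, exists n, (N <= n)%nat /\ L - eps < a n.
Proof. intros H eps He. exact (proj1 (H (mkposreal eps He))). Qed.

Lemma LS_T1 (a : nat -> R) L M : is_LimSup_seq a (Finite L) ->
  (forall eps, 0 < eps -> exists N, forall n, (N <= n)%nat -> a n <= M + eps) -> L <= M.
Proof. intros H HM. destruct (Rle_dec L M) as [|Hn]; auto. exfalso.
  destruct (HM ((L - M)/2) ltac:(lra)) as [N HN].
  destruct (LS_freq a L H ((L-M)/2) ltac:(lra) N) as [n [Hn1 Hn2]]. specialize (HN n Hn1). lra. Qed.

Lemma LS_T2 (a : nat -> R) L M : is_LimSup_seq a (Finite L) ->
  (forall eps, 0 < eps -> forall N, exists n, (N <= n)%nat /\ M - eps <= a n) -> M <= L.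
Proof. intros H HM. destruct (Rle_dec M L) as [|Hn]; auto. exfalso.
  destruct (LS_up a L H ((M - L)/2) ltac:(lra)) as [N HN].
  destruct (HM ((M-L)/2) ltac:(lra) N) as [n [Hn1 Hn2]]. specialize (HN n Hn1). lra. Qed.

Lemma phi_ge (phi : nat -> nat) : (forall n, (phi n < phi (S n))%nat) -> forall n, (n <= phi n)%nat.
Proof. intros H n. induction n. lia. specialize (H n). lia. Qed.

Lemma noninc_le (a : nat -> R) : (forall n, a (S n) <= a n) -> forall i j, (i <= j)%nat -> a j <= a i.
Proof. intros H i j Hij. induction Hij. lra. specialize (H m). lra. Qed.

Lemma LS_sub_noninc (a : nat -> R) L phi : (forall n, a (S n) <= a n) -> (forall n, (phi n < phi (S n))%nat) ->
  is_LimSup_seq a (Finite L) -> forall L', is_LimSup_seq (fun n => a (phi n)) (Finite L') -> L' = L.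
Proof. intros Hm Hp HL L' HL'. apply Rle_antisym.
  - apply (LS_T1 _ _ _ HL'). intros eps He. destruct (LS_up a L HL eps He) as [N HN].
    exists N. intros n Hn. assert (Hf := phi_ge phi Hp n). left; apply HN; lia.
  - apply (LS_T2 _ _ _ HL'). intros eps He N. exists N. split; [lia|].
    destruct (LS_freq a L HL eps He (phi N)) as [j [Hj1 Hj2]].
    assert (a j <= a (phi N)) by (apply noninc_le; auto). lra. Qed.

Lemma COSL x y : 0 <= x <= PI -> 0 <= y <= PI -> cos x - cos y <= Rabs (x - y).
Proof. intros Hx Hy. destruct (Rle_dec x y).
  - rewrite Rabs_left1 by lra. assert (H := cos_lip x y ltac:(lra) r). lra.
  - assert (cos x <= cos y) by (apply cos_decr_1; lra). assert (0 <= Rabs (x - y)) by apply Rabs_pos. lra. Qed.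

Definition rr {X} (d : X -> X -> R) (u : nat -> X) v := real (LimSup_seq (fun n => d v (u n))).

Lemma rr_spec k X (d : X -> X -> R) (H : HK k d) u v :
  is_LimSup_seq (fun n => d v (u n)) (Finite (rr d u v)) /\ asymp_r d v u = Finite (rr d u v) /\
  0 <= rr d u v <= PI / (2 * sqrt k).
Proof. destruct (HK_met k X d H) as [Hnn _]. destruct H as [Hk [_ Hd]].
  destruct (LS_fin (fun n => d v (u n)) (PI / (2 * sqrt k))) as [H1 H2].
  { intros n; split; [apply Hnn| left; apply Hd]. }
  unfold rr, asymp_r. split; [|split]; auto. split.
  - apply (LS_T2 _ _ _ H1). intros eps He N. exists N. split; auto. specialize (Hnn v (u N)). lra.
  - apply (LS_T1 _ _ _ H1). intros eps He. exists 0%nat. intros n _. specialize (Hd v (u n)). lra. Qed.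

Lemma rr_lip k X (d : X -> X -> R) (H : HK k d) u a b : rr d u a <= d a b + rr d u b.
Proof. destruct (rr_spec k X d H u a) as [Ha _]. destruct (rr_spec k X d H u b) as [Hb _].
  destruct (HK_met k X d H) as [_ [_ [_ Ht]]].
  apply (LS_T1 _ _ _ Ha). intros eps He. destruct (LS_up _ _ Hb eps He) as [N HN].
  exists N. intros n Hn. specialize (HN n Hn). specialize (Ht a b (u n)). lra. Qed.

Lemma MID k X (d : X -> X -> R) (H : HK k d) a b g q : geodesic d a b g ->
  (cos (sqrt k * d a q) + cos (sqrt k * d b q)) / 2 <=
  cos (sqrt k * d (g (1/2 * d a b)) q) * cos (sqrt k * d a b / 2).
Proof. intros Hg. destruct (HK_met k X d H) as [Hnn [Hz [Hs Ht]]].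
  assert (Hk : 0 < k) by (destruct H; auto). assert (Hsk := sk_pos k Hk). assert (Hpi := PI_RGT_0).
  destruct (Req_dec (d a b) 0) as [E|E].
  - assert (a = b) by (apply Hz; auto). subst b. rewrite E. destruct Hg as [Hg0 _].
    replace (1/2*0) with 0 by ring. rewrite Hg0. rewrite Rmult_0_r. unfold Rdiv. rewrite Rmult_0_l. rewrite cos_0. lra.
  - assert (Hab : 0 < d a b) by (specialize (Hnn a b); lra).
    assert (Hsc := SC k X d H a b q g (1/2) Hg Hab ltac:(lra)).
    set (th := sqrt k * d a b) in *.
    assert (Hth := HK_rng k X d H a b). fold th in Hth.
    replace ((1 - 1/2) * th) with (th/2) in Hsc by field. replace (1/2 * th) with (th/2) in Hsc by field.
    replace th with (2 * (th/2)) in Hsc at 3 by field. rewrite sin_2a in Hsc.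
    assert (Hs2 : 0 < sin (th/2)) by (apply sin_gt_0; unfold th in *; nra).
    apply (Rmult_le_reg_l (2 * sin (th/2))); [lra|]. unfold th in *. nra. Qed.

Lemma rr_mid k X (d : X -> X -> R) (H : HK k d) u a b g R : geodesic d a b g ->
  rr d u a <= R -> rr d u b <= R -> 0 <= R <= PI / (2 * sqrt k) ->
  cos (sqrt k * R) <= cos (sqrt k * rr d u (g (1/2 * d a b))) * cos (sqrt k * d a b / 2).
Proof. intros Hg HaR HbR HR.
  assert (Hk : 0 < k) by (destruct H; auto). assert (Hsk := sk_pos k Hk). assert (Hpi := PI_RGT_0).
  destruct (HK_met k X d H) as [Hnn [Hz [Hs Ht]]].
  set (Dd := PI / (2 * sqrt k)) in *.
  assert (HD : sqrt k * Dd = PI/2) by (unfold Dd; field; lra).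
  assert (HDp : 0 < Dd) by (unfold Dd; apply Rdiv_lt_0_compat; lra).
  set (m := g (1/2 * d a b)).
  destruct (rr_spec k X d H u a) as [La _]. destruct (rr_spec k X d H u b) as [Lb _].
  destruct (rr_spec k X d H u m) as [Lm [_ Bm]].
  set (rm := rr d u m) in *.
  assert (Hth := HK_rng k X d H a b).
  set (c2 := cos (sqrt k * d a b / 2)).
  assert (Hc2 : 0 < c2 <= 1) by (unfold c2; split; [apply cos_gt_0; lra| apply COS_bound]).
  destruct (Rle_dec (cos (sqrt k * R)) (cos (sqrt k * rm) * c2)) as [|Hn]; auto. exfalso.
  set (gap := cos (sqrt k * R) - cos (sqrt k * rm) * c2).
  assert (Hgap : 0 < gap) by (unfold gap; lra).
  set (eps := Rmin Dd (gap / (4 * sqrt k))).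
  assert (He : 0 < eps) by (unfold eps; apply Rmin_glb_lt; [lra| apply Rdiv_lt_0_compat; lra]).
  assert (He1 : eps <= Dd) by apply Rmin_l. assert (He2 : eps <= gap / (4 * sqrt k)) by apply Rmin_r.
  destruct (LS_up _ _ La eps He) as [N1 HN1]. destruct (LS_up _ _ Lb eps He) as [N2 HN2].
  destruct (LS_freq _ _ Lm eps He (N1 + N2)%nat) as [n [Hn1 Hn2]].
  specialize (HN1 n ltac:(lia)). specialize (HN2 n ltac:(lia)). simpl in *.
  assert (Hmid := MID k X d H a b g (u n) Hg). fold m c2 in Hmid.
  assert (A1 : cos (sqrt k * (R + eps)) <= cos (sqrt k * d a (u n)))
    by (apply cos_decr_1; try nra; apply Rmult_le_pos; [lra|apply Hnn]).
  assert (A2 : cos (sqrt k * (R + eps)) <= cos (sqrt k * d b (u n)))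
    by (apply cos_decr_1; try nra; apply Rmult_le_pos; [lra|apply Hnn]).
  assert (A3 : cos (sqrt k * R) - cos (sqrt k * (R + eps)) <= sqrt k * eps)
    by (assert (Hl := cos_lip (sqrt k * R) (sqrt k * (R + eps)) ltac:(nra) ltac:(nra)); lra).
  assert (Hdm := HK_rng k X d H m (u n)).
  assert (A4 : cos (sqrt k * d m (u n)) <= cos (sqrt k * rm) + sqrt k * eps).
  { destruct (Rle_dec rm (d m (u n))).
    - assert (cos (sqrt k * d m (u n)) <= cos (sqrt k * rm)) by (apply cos_decr_1; nra). nra.
    - assert (Hl := cos_lip (sqrt k * d m (u n)) (sqrt k * rm) ltac:(nra) ltac:(nra)). nra. }
  assert (A5 : cos (sqrt k * d m (u n)) * c2 <= cos (sqrt k * rm) * c2 + sqrt k * eps) by nra.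
  assert (sqrt k * eps <= gap / 4).
  { apply (Rmult_le_compat_l (sqrt k)) in He2; [|lra].
    replace (sqrt k * (gap / (4 * sqrt k))) with (gap/4) in He2 by (field; lra). lra. }
  unfold gap in *. lra. Qed.

Lemma center_iff k X (d : X -> X -> R) (H : HK k d) u v :
  asymp_center d u v <-> forall w, rr d u v <= rr d u w.
Proof. unfold asymp_center, asymp_radius.
  assert (Hr : forall w, asymp_r d w u = Finite (rr d u w)) by (intros w; apply (rr_spec k X d H)).
  rewrite Hr. split.
  - intros E w. destruct (Glb_Rbar_correct (fun r => exists v, asymp_r d v u = Finite r)) as [Hlb _].
    rewrite <- E in Hlb. apply (Hlb (rr d u w)). exists w. auto.
  - intros Hm. symmetry. apply is_glb_Rbar_unique. split.
    + intros r [w Hw]. rewrite Hr in Hw. injection Hw as <-. apply Hm.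
    + intros b Hb. apply Hb. exists v. auto. Qed.

Lemma delta_small eta g : 0 < eta -> 0 < g -> exists N, forall n, (N <= n)%nat -> eta / (INR n + 1) < g.
Proof. intros He Hg. destruct (archimed_cor1 (g / eta)) as [N [HN HN0]]. apply Rdiv_lt_0_compat; auto.
  exists N. intros n Hn. assert (HNp : 0 < INR N) by (apply lt_0_INR; lia).
  assert (INR N <= INR n) by (apply le_INR; auto).
  apply (Rmult_lt_compat_l eta) in HN; auto. replace (eta * (g / eta)) with g in HN by (field; lra).
  assert (eta / (INR n + 1) < eta / INR N).
  { unfold Rdiv. apply Rmult_lt_compat_l; auto. apply Rinv_lt_contravar; nra. }
  unfold Rdiv in *. lra. Qed.

Lemma GEN k X (d : X -> X -> R) (H : HK k d) (Hcomp : metric_complete d) (h : X -> R) (T : X -> Prop) :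
  (forall a b g, T a -> T b -> geodesic d a b g -> T (g (1/2 * d a b))) ->
  (forall u l, (forall n, T (u n)) -> (forall eps, 0 < eps -> exists N, forall n, (N <= n)%nat -> d (u n) l < eps) -> T l) ->
  (forall a b, h a <= d a b + h b) ->
  (forall a, 0 <= h a <= PI / (2 * sqrt k)) ->
  (forall a b g R, T a -> T b -> geodesic d a b g -> h a <= R -> h b <= R -> 0 <= R <= PI / (2 * sqrt k) ->
     cos (sqrt k * R) <= cos (sqrt k * h (g (1/2 * d a b))) * cos (sqrt k * d a b / 2)) ->
  (exists a0, T a0 /\ h a0 < PI / (2 * sqrt k)) ->
  exists c, T c /\ forall w, T w -> h c <= h w.
Proof.
  intros Hmid Hcl Hlip Hbd Hconv [a0 [Ta0 Ha0]].
  assert (Hk : 0 < k) by (destruct H; auto). assert (Hsk := sk_pos k Hk). assert (Hpi := PI_RGT_0).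
  destruct (HK_met k X d H) as [Hnn [Hz [Hs Ht]]].
  set (Dd := PI / (2 * sqrt k)) in *.
  assert (HD : sqrt k * Dd = PI/2) by (unfold Dd; field; lra).
  set (E := fun r => exists w, T w /\ r = - h w).
  destruct (completeness E) as [s [Hs1 Hs2]].
  { exists 0. intros r [w [_ ->]]. specialize (Hbd w). lra. }
  { exists (- h a0). exists a0; auto. }
  set (rho := - s).
  assert (Hr1 : forall w, T w -> rho <= h w).
  { intros w Tw. assert (- h w <= s) by (apply Hs1; exists w; auto). unfold rho; lra. }
  assert (Hr2 : forall eps, 0 < eps -> exists w, T w /\ h w < rho + eps).
  { intros eps He. apply not_all_not_ex. intros Hn.
    assert (s <= s - eps); [|lra]. apply Hs2. intros r [w [Tw ->]].
    specialize (Hn w). unfold rho in Hn. apply Rnot_lt_le. intros Hc. apply Hn. split; auto. lra. }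
  assert (Hrho : 0 <= rho < Dd).
  { split. assert (s <= 0); [|unfold rho; lra]. apply Hs2. intros r [v [_ ->]]. specialize (Hbd v). lra.
    specialize (Hr1 a0 Ta0). lra. }
  set (eta := (Dd - rho) / 2).
  assert (Heta : 0 < eta) by (unfold eta; lra).
  set (del := fun n : nat => eta / (INR n + 1)).
  assert (Hdel : forall n, 0 < del n <= eta).
  { intros n. unfold del. assert (Hn := pos_INR n). split. apply Rdiv_lt_0_compat; lra.
    apply (Rmult_le_reg_r (INR n + 1)); [lra|]. unfold Rdiv; rewrite Rmult_assoc, Rinv_l by lra. nra. }
  assert (Hdeld : forall i j, (i <= j)%nat -> del j <= del i).
  { intros i j Hij. unfold del. assert (INR i <= INR j) by (apply le_INR; auto). assert (Hi := pos_INR i).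
    unfold Rdiv. apply Rmult_le_compat_l; [lra|]. apply Rinv_le_contravar; lra. }
  assert (Hex : forall n, exists w, T w /\ h w < rho + del n) by (intros n; apply Hr2, Hdel).
  set (w := fun n => proj1_sig (constructive_indefinite_description _ (Hex n))).
  assert (Hw : forall n, T (w n) /\ h (w n) < rho + del n) by (intros n; exact (proj2_sig (constructive_indefinite_description _ (Hex n)))).
  set (crho := cos (sqrt k * rho)).
  assert (Hcr : 0 < crho <= 1) by (unfold crho; split; [apply cos_gt_0; nra| apply COS_bound]).
  assert (Hcauchy : forall eps, 0 < eps -> exists N, forall m n, (N <= m)%nat -> (N <= n)%nat -> d (w m) (w n) < eps).
  { intros eps He. destruct (delta_small eta (eps * eps * sqrt k * crho / 72) Heta) as [N HN].
    { apply Rdiv_lt_0_compat; [|lra]. repeat apply Rmult_lt_0_compat; lra. }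
    exists N. intros m n Hm Hn.
    destruct (Hw m) as [Tm Hm']. destruct (Hw n) as [Tn Hn'].
    assert (Hdm := Hdeld N m Hm). assert (Hdn := Hdeld N n Hn).
    set (R := rho + del N).
    destruct (HK_geo k X d H (w m) (w n)) as [g Hg].
    assert (HR : 0 <= R <= Dd) by (unfold R; specialize (Hdel N); unfold eta in *; lra).
    assert (Hc := Hconv (w m) (w n) g R Tm Tn Hg ltac:(unfold R; lra) ltac:(unfold R; lra) HR).
    set (mid := g (1/2 * d (w m) (w n))) in *.
    assert (Tmid : T mid) by (apply Hmid; auto).
    assert (Hmr := Hr1 mid Tmid). assert (Hbm := Hbd mid).
    assert (C1 : cos (sqrt k * h mid) <= crho) by (apply cos_decr_1; nra).
    set (th := sqrt k * d (w m) (w n)) in *.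
    assert (Hth := HK_rng k X d H (w m) (w n)). fold th in Hth.
    assert (Hc2 : 0 <= cos (th / 2)) by (apply cos_ge_0; lra).
    assert (C2 : crho - cos (sqrt k * R) <= sqrt k * del N).
    { assert (Hl := cos_lip (sqrt k * rho) (sqrt k * R) ltac:(nra) ltac:(unfold R; specialize (Hdel N); nra)).
      unfold crho. replace (sqrt k * R - sqrt k * rho) with (sqrt k * del N) in Hl by (unfold R; ring). lra. }
    assert (C3 := one_minus_cos_ge (th/2) ltac:(lra) ltac:(lra)).
    assert (C4 : crho * ((th/2)^2/18) <= sqrt k * del N) by nra.
    specialize (HN N (Nat.le_refl N)). fold (del N) in HN.
    assert (C5 : th * th < (sqrt k * eps) * (sqrt k * eps)).
    { apply (Rmult_lt_compat_l (sqrt k)) in HN; [|lra].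
      replace (sqrt k * (eps * eps * sqrt k * crho / 72)) with (crho * ((sqrt k * eps) * (sqrt k * eps)) / 72) in HN by (field).
      nra. }
    assert (0 <= th) by lra.
    assert (0 < sqrt k * eps) by (apply Rmult_lt_0_compat; lra). assert (th < sqrt k * eps) by (destruct (Rlt_dec th (sqrt k * eps)); auto; nra). apply (Rmult_lt_reg_l (sqrt k)); auto. }
  destruct (Hcomp w Hcauchy) as [l Hl].
  exists l. assert (Tl : T l) by (apply (Hcl w l); [intros; apply Hw| auto]).
  split; auto.
  assert (Hlr : h l <= rho).
  { apply Rnot_lt_le. intros Hc. set (eps := h l - rho).
    destruct (Hl (eps/2) ltac:(unfold eps; lra)) as [N1 HN1].
    destruct (delta_small eta (eps/2) Heta ltac:(unfold eps; lra)) as [N2 HN2].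
    specialize (HN1 (N1 + N2)%nat ltac:(lia)). specialize (HN2 (N1 + N2)%nat ltac:(lia)).
    fold (del (N1 + N2)%nat) in HN2. destruct (Hw (N1 + N2)%nat) as [_ Hh].
    assert (Hli := Hlip l (w (N1 + N2)%nat)). rewrite Hs in Hli. unfold eps in *. lra. }
  intros v Tv. specialize (Hr1 v Tv). lra.
Qed.

Lemma UNQ k X (d : X -> X -> R) (H : HK k d) (h : X -> R) :
  (forall a, 0 <= h a <= PI / (2 * sqrt k)) ->
  (forall a b g R, geodesic d a b g -> h a <= R -> h b <= R -> 0 <= R <= PI / (2 * sqrt k) ->
     cos (sqrt k * R) <= cos (sqrt k * h (g (1/2 * d a b))) * cos (sqrt k * d a b / 2)) ->
  forall c1 c2, (forall w, h c1 <= h w) -> (forall w, h c2 <= h w) -> h c1 < PI / (2 * sqrt k) -> c1 = c2.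
Proof.
  intros Hbd Hconv c1 c2 H1 H2 HD1.
  assert (Hk : 0 < k) by (destruct H; auto). assert (Hsk := sk_pos k Hk). assert (Hpi := PI_RGT_0).
  destruct (HK_met k X d H) as [Hnn [Hz [Hs Ht]]].
  assert (HD : sqrt k * (PI / (2 * sqrt k)) = PI/2) by (field; lra).
  assert (E : h c1 = h c2) by (apply Rle_antisym; auto).
  destruct (HK_geo k X d H c1 c2) as [g Hg].
  set (rho := h c1) in *.
  assert (Hb1 := Hbd c1). fold rho in Hb1.
  assert (Hc := Hconv c1 c2 g rho Hg). specialize (Hc ltac:(unfold rho in *; lra) ltac:(unfold rho in *; lra) ltac:(unfold rho in *; lra)).
  set (mid := g (1/2 * d c1 c2)) in *.
  assert (Hm := H1 mid). assert (Hbm := Hbd mid). fold rho in Hm.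
  assert (C1 : cos (sqrt k * h mid) <= cos (sqrt k * rho)) by (apply cos_decr_1; nra).
  assert (Hcr : 0 < cos (sqrt k * rho)) by (apply cos_gt_0; nra).
  assert (Hth := HK_rng k X d H c1 c2).
  assert (Hc2 : 0 <= cos (sqrt k * d c1 c2 / 2)) by (apply cos_ge_0; lra).
  assert (1 <= cos (sqrt k * d c1 c2 / 2)).
  { apply (Rmult_le_reg_l (cos (sqrt k * rho))); auto. nra. }
  apply Hz. destruct (Req_dec (d c1 c2) 0) as [|Hn]; auto. exfalso.
  assert (0 < d c1 c2) by (specialize (Hnn c1 c2); lra).
  assert (cos (sqrt k * d c1 c2 / 2) < cos 0) by (apply cos_decreasing_1; nra).
  rewrite cos_0 in *. lra.
Qed.

Lemma Rbar_fin_le X (f : X -> Rbar) y r : proper_fun f -> Rbar_le (f y) (Finite r) -> f y = Finite (real (f y)).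
Proof. intros [Hm _] H. destruct (f y) eqn:E; auto. simpl in H; tauto. exfalso; apply (Hm y); auto. Qed.

Lemma DLSC k X (d : X -> X -> R) f (H : HK k d) (Hcomp : metric_complete d) (Hp : proper_fun f)
  (Hcv : convex_fun d f) (Hlsc : lsc d f) z0 (Hz0 : is_min_point f z0) (u : nat -> X)
  (Hfu : forall eps, 0 < eps -> exists N, forall n, (N <= n)%nat -> Rbar_le (f (u n)) (Finite (real (f z0) + eps)))
  c (Hc : forall w, rr d u c <= rr d u w) (HcD : rr d u c < PI / (2 * sqrt k)) : is_min_point f c.
Proof.
  assert (Hk : 0 < k) by (destruct H; auto). assert (Hsk := sk_pos k Hk). assert (Hpi := PI_RGT_0).
  destruct (HK_met k X d H) as [Hnn [Hz [Hs Ht]]].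
  assert (Hd : forall v w, d v w < PI / (2 * sqrt k)) by (destruct H as [_ [_ Hd]]; exact Hd).
  set (Dd := PI / (2 * sqrt k)) in *.
  assert (HD : sqrt k * Dd = PI/2) by (unfold Dd; field; lra).
  assert (Fz := min_fin X f z0 Hp Hz0). set (m := real (f z0)) in *.
  assert (Key : forall eps, 0 < eps -> Rbar_le (f c) (Finite (m + eps))).
  { intros eps He.
    set (S := fun y => Rbar_le (f y) (Finite (m + eps))).
    assert (convS : forall a b g t, S a -> S b -> geodesic d a b g -> 0 <= t <= 1 -> S (g (t * d a b))).
    { intros a b g t Sa Sb Hg Htt. unfold S in *.
      assert (Fa := Rbar_fin_le X f a _ Hp Sa). assert (Fb := Rbar_fin_le X f b _ Hp Sb).
      eapply Rbar_le_trans; [apply (Hcv a b g t Hg Htt)|]. rewrite Fa, Fb in *. simpl in *. nra. }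
    destruct (GEN k X d H Hcomp (fun y => d c y) S) as [P [SP HP]].
    - intros a b g Sa Sb Hg. apply (convS a b g (1/2)); auto; lra.
    - intros v l Hv Hvl. unfold S. apply Rbar_not_lt_le. intros Hlt.
      destruct (Hlsc l (m + eps) Hlt) as [del [Hdel Hy]].
      destruct (Hvl del Hdel) as [N HN]. specialize (Hy (v N) (HN N (Nat.le_refl N))).
      apply (Rbar_lt_not_le _ _ Hy). apply Hv.
    - intros a b. specialize (Ht c b a). rewrite (Hs b a) in Ht. lra.
    - intros a. split; [apply Hnn| left; apply Hd].
    - intros a b g RR Sa Sb Hg HaR HbR HR. cbv beta in *.
      assert (Hmid := MID k X d H a b g c Hg). rewrite (Hs (g (1/2 * d a b)) c) in Hmid.
      rewrite (Hs a c), (Hs b c) in Hmid.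
      assert (Hca := HK_rng k X d H c a). assert (Hcb := HK_rng k X d H c b).
      assert (SR : 0 <= sqrt k * RR) by (apply Rmult_le_pos; lra). assert (SR2 : sqrt k * RR <= PI/2) by (rewrite <- HD; apply Rmult_le_compat_l; unfold Dd in *; lra).
      assert (cos (sqrt k * RR) <= cos (sqrt k * d c a)) by (apply cos_decr_1; try lra; apply Rmult_le_compat_l; lra).
      assert (cos (sqrt k * RR) <= cos (sqrt k * d c b)) by (apply cos_decr_1; try lra; apply Rmult_le_compat_l; lra).
      lra.
    - destruct (Hfu eps He) as [N HN]. exists (u N). split; [apply HN; lia| apply Hd].
    - simpl in HP.
      assert (Proj : forall y, S y -> d P y <= d y c).
      { intros y Sy. destruct (Req_dec (d P y) 0) as [E|E]. rewrite E; apply Hnn.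
        assert (Hpy : 0 < d P y) by (specialize (Hnn P y); lra).
        destruct (HK_geo k X d H P y) as [g Hg].
        set (th := sqrt k * d P y).
        assert (Hth : 0 < th < PI/2) by (assert (Hr2 := HK_rng k X d H P y); unfold th; split; [nra|lra]).
        set (CP := cos (sqrt k * d P c)).
        assert (HCP := cos_pos k X d H P c). fold CP in HCP.
        assert (Ha := SL th CP (cos (sqrt k * d y c) - cos th * CP) Hth ltac:(lra)).
        assert (Hst : 0 < sin th) by (apply sin_gt_0; lra).
        assert (Hcth : 0 <= cos th) by (apply cos_ge_0; lra).
        assert (a0 : cos (sqrt k * d y c) - cos th * CP <= 0).
        { apply Ha. intros t Htt.
          assert (Hsc := SC k X d H P y c g t Hg Hpy ltac:(lra)). fold th CP in Hsc.
          set (w := g (t * d P y)) in *.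
          assert (Sw : S w) by (apply convS; auto; lra).
          assert (Hw := HP w Sw).
          assert (Hwc := HK_rng k X d H w c). assert (HPc := HK_rng k X d H P c).
          assert (cos (sqrt k * d w c) <= CP) by (unfold CP; rewrite (Hs w c), (Hs P c) in *; apply cos_decr_1; nra).
          replace ((1 - t) * th) with (th - t * th) in Hsc by ring. rewrite sin_minus in Hsc.
          assert (sin th * cos (sqrt k * d w c) <= sin th * CP) by (apply Rmult_le_compat_l; lra).
          nra. }
        assert (cos (sqrt k * d y c) <= cos th) by nra.
        assert (Hyc := HK_rng k X d H y c).
        assert (th <= sqrt k * d y c) by (apply cos_decr_0; lra).
        unfold th in *. apply (Rmult_le_reg_l (sqrt k)); auto. }
      assert (HrP : rr d u P <= rr d u c).
      { destruct (rr_spec k X d H u P) as [LP _]. destruct (rr_spec k X d H u c) as [Lc _].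
        apply (LS_T1 _ _ _ LP). intros e' He'. destruct (LS_up _ _ Lc e' He') as [N1 HN1].
        destruct (Hfu eps He) as [N2 HN2]. exists (N1 + N2)%nat. intros n Hn.
        specialize (HN1 n ltac:(lia)). specialize (HN2 n ltac:(lia)).
        assert (Hpr := Proj (u n) HN2). rewrite (Hs (u n) c) in Hpr. simpl in HN1. lra. }
      assert (EcP : c = P).
      { apply (UNQ k X d H (rr d u)).
        - intros a; apply (rr_spec k X d H u a).
        - intros a b g R Hg HaR HbR HR. apply (rr_mid k X d H u a b g R); auto.
        - auto.
        - intros w. specialize (Hc w). lra.
        - auto. }
      rewrite EcP. exact SP. }
  assert (Fc := Rbar_fin_le X f c _ Hp (Key 1 ltac:(lra))).
  assert (Hfc : real (f c) <= m).
  { apply Rnot_lt_le. intros Hlt. assert (K := Key ((real (f c) - m)/2) ltac:(lra)). rewrite Fc in K. simpl in K. lra. }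
  intros y. eapply Rbar_le_trans; [|apply (Hz0 y)]. rewrite Fc, Fz. simpl. exact Hfc.
Qed.

Lemma center_exists k X (d : X -> X -> R) (H : HK k d) (Hcomp : metric_complete d) u a0 :
  rr d u a0 < PI / (2 * sqrt k) -> exists c, forall w, rr d u c <= rr d u w.
Proof. intros Ha0.
  destruct (GEN k X d H Hcomp (rr d u) (fun _ => True)) as [c [_ Hc]].
  - auto. - auto. - intros a b; apply (rr_lip k X d H). - intros a; apply (rr_spec k X d H).
  - intros a b g RR _ _ Hg Ha Hb HR. apply (rr_mid k X d H u a b g RR); auto.
  - exists a0; auto.
  - exists c. intros w; apply Hc; auto. Qed.

Theorem mainTheorem3 (kappa : R) (X : Type) (d : X -> X -> R) (f : X -> Rbar)
  (x0 : X) (lam : nat -> R) (x : nat -> X) :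
  0 < kappa ->
  CAT kappa d ->
  metric_complete d ->
  (forall v w, d v w < PI / (2 * sqrt kappa)) ->
  proper_fun f -> convex_fun d f -> lsc d f ->
  (exists z, is_min_point f z) ->
  (forall n, 0 < lam n) ->
  is_lim_seq (sum_n lam) p_infty ->
  x 0%nat = x0 ->
  (forall n y,
     Rbar_le (Rbar_plus (f (x (S n))) (Finite (/ lam n * Psi kappa d (x n) (x (S n)))))
             (Rbar_plus (f y) (Finite (/ lam n * Psi kappa d (x n) y)))) ->
  exists z, is_min_point f z /\ Delta_converges d x z.
Proof.
  intros Hk Hcat Hcomp Hd Hp Hcv Hlsc [z0 Hz0] Hl Hlim _ Hr.
  assert (H : HK kappa d) by (split; [|split]; auto).
  assert (HS : SEQ kappa d f lam x) by exact (conj H (conj Hp (conj Hcv (conj Hl Hr)))).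
  assert (Hfc := f_conv kappa X d f lam x HS z0 Hz0 Hlim).
  destruct (HK_met kappa X d H) as [Hnn [Hz [Hs Ht]]].
  set (Dd := PI / (2 * sqrt kappa)) in *.
  assert (Hb0 : forall phi : nat -> nat, (forall n, (phi n < phi (S n))%nat) ->
            rr d (fun n => x (phi n)) z0 < Dd).
  { intros phi Hphi. destruct (rr_spec kappa X d H (fun n => x (phi n)) z0) as [L _].
    assert (rr d (fun n => x (phi n)) z0 <= d z0 (x 0%nat)).
    { apply (LS_T1 _ _ _ L). intros e He. exists 0%nat. intros n _.
      assert (Hf := FEJd0 kappa X d f lam x HS z0 Hz0 (phi n)). lra. }
    specialize (Hd z0 (x 0%nat)). lra. }
  assert (Hid : forall n, (n < S n)%nat) by (intros; lia).
  assert (Hfu : forall phi : nat -> nat, (forall n, (phi n < phi (S n))%nat) ->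
     forall eps, 0 < eps -> exists N, forall n, (N <= n)%nat -> Rbar_le (f (x (phi n))) (Finite (real (f z0) + eps))).
  { intros phi Hphi eps He. destruct (Hfc eps He) as [N HN]. exists N. intros n Hn.
    apply HN. assert (Hg := phi_ge phi Hphi n). lia. }
  (* Fejer invariance of rr along subsequences *)
  assert (Fsub : forall phi : nat -> nat, (forall n, (phi n < phi (S n))%nat) ->
     forall p, is_min_point f p -> rr d (fun n => x (phi n)) p = rr d x p).
  { intros phi Hphi p Hpm.
    apply (LS_sub_noninc (fun n => d p (x n)) (rr d x p) phi).
    - intros n. apply (FEJd kappa X d f lam x HS p Hpm n).
    - auto.
    - apply (rr_spec kappa X d H x p).
    - apply (rr_spec kappa X d H (fun n => x (phi n)) p). }
  destruct (center_exists kappa X d H Hcomp x z0 (Hb0 (fun n => n) Hid)) as [z Hzc].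
  assert (Hb0x : rr d x z0 < Dd) by exact (Hb0 (fun n => n) Hid).
  assert (HzD : rr d x z < Dd) by (specialize (Hzc z0); lra).
  assert (Hzm : is_min_point f z).
  { apply (DLSC kappa X d f H Hcomp Hp Hcv Hlsc z0 Hz0 x (Hfu (fun n => n) Hid) z Hzc HzD). }
  exists z. split; auto. split.
  - exists z0, Dd. intros n. left; apply Hd.
  - intros phi Hphi v.
    set (u := fun n => x (phi n)).
    destruct (center_exists kappa X d H Hcomp u z0 (Hb0 phi Hphi)) as [c Hc].
    assert (HcD : rr d u c < Dd) by (specialize (Hc z0); specialize (Hb0 phi Hphi); fold u in Hb0; lra).
    assert (Hcm : is_min_point f c) by (apply (DLSC kappa X d f H Hcomp Hp Hcv Hlsc z0 Hz0 u (Hfu phi Hphi) c Hc HcD)).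
    assert (E1 := Fsub phi Hphi z Hzm). assert (E2 := Fsub phi Hphi c Hcm). fold u in E1, E2.
    assert (Hzu : forall w, rr d u z <= rr d u w).
    { intros w. specialize (Hzc c). specialize (Hc w). lra. }
    assert (HzuD : rr d u z < Dd) by lra.
    rewrite (center_iff kappa X d H u v). split.
    + intros Hv. symmetry. apply (UNQ kappa X d H (rr d u)).
      * intros a; apply (rr_spec kappa X d H u a).
      * intros a b g RR Hg Ha Hb HR. apply (rr_mid kappa X d H u a b g RR); auto.
      * exact Hzu.
      * exact Hv.
      * exact HzuD.
    + intros ->. exact Hzu.
Qed.
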